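(* For every $k$-hyperdigraph $H$, $pc(H)\le \alpha(H)$.
   Context: For $2\le k\le n$, a $k$-hyperdigraph $H$ on $n$ vertices is a pair $(V,A)$ where $V$ is a set of $n$ vertices and $A$ is a set of $k$-tuples of distinct vertices (hyperarcs) such that for each $k$-subset $S\subseteq V$, $A$ contains at most one of the $k!$ orderings of $S$. For a hyperarc $a=(x_1\dots x_k)$, $x_i$ precedes $x_j$ in $a$ if $i<j$. A path is an alternating sequence $x_1a_1x_2\dots x_ma_mx_{m+1}$ ($m\ge 0$) of distinct vertices and distinct hyperarcs with $x_i$ preceding $x_{i+1}$ in $a_i$. The path covering number $pc(H)$ is the minimum number of vertex-disjoint paths (using distinct hyperarcs) covering $V$. A set $I\subseteq V$ is independent if no hyperarc of $H$ has all its vertices in $I$; the independence number $\alpha(H)$ is the maximum size of an independent set. *)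

(* Defs.v *)
From mathcomp Require Import all_boot.
Set Implicit Arguments. Unset Strict Implicit. Unset Printing Implicit Defensive.

Section Hyperdigraph.
Variables (V : finType) (k : nat).

Definition khyperdigraph (A : {set k.-tuple V}) : Prop :=
  [/\ 2 <= k, k <= #|V|,
      (forall a, a \in A -> uniq a) &
      (forall a b, a \in A -> b \in A -> [set x in a] = [set x in b] -> a = b)].

Definition precedes (a : k.-tuple V) (x y : V) : bool :=
  [&& x \in a, y \in a & index x a < index y a].

(* [:: x_1; ...; x_(m+1)] and [:: a_1; ...; a_m] form a chain with x_i
   preceding x_(i+1) in a_i (in particular m+1 vertices, m arcs). *)
Fixpoint chain (xs : seq V) (arcs : seq (k.-tuple V)) : bool :=
  match xs, arcs with
  | [:: x], [::] => true
  | x :: ((y :: _) as xs'), a :: arcs' => precedes a x y && chain xs' arcs'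
  | _, _ => false
  end.

Definition is_path (A : {set k.-tuple V})
    (p : seq V * seq (k.-tuple V)) : bool :=
  [&& chain p.1 p.2, uniq p.1, uniq p.2 & all (fun a => a \in A) p.2].

(* A path cover: a family of paths, pairwise vertex-disjoint (the
   concatenation of their vertex lists is duplicate-free), using distinct
   hyperarcs (the concatenation of their arc lists is duplicate-free),
   and covering all of V. *)
Definition path_cover (A : {set k.-tuple V})
    (P : seq (seq V * seq (k.-tuple V))) : Prop :=
  [/\ all (is_path A) P,
      uniq (flatten (map fst P)),
      uniq (flatten (map snd P)) &
      (forall v : V, v \in flatten (map fst P))].

Definition independent (A : {set k.-tuple V}) (I : {set V}) : bool :=
  [forall a in A, ~~ all (fun x => x \in I) a].

Definition alpha (A : {set k.-tuple V}) : nat :=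
  \max_(I : {set V} | independent A I) #|I|.

End Hyperdigraph.

(* Main.v *)
Require Import Defs.
From mathcomp Require Import all_boot.
From mathcomp Require Import zify.
Set Implicit Arguments. Unset Strict Implicit. Unset Printing Implicit Defensive.

Section Aux.
Variables (V : finType) (k : nat) (x0 : V).
Notation arc := (k.-tuple V).
Notation pth := (seq V * seq arc)%type.
Implicit Types (B : {set arc}) (W : {set V}) (xs s : seq V) (ars : seq arc) (P : seq pth) (p q r : pth) (c a : arc).

Definition lastp (p : pth) := last x0 p.1.
Definition terms (P : seq pth) := map lastp P.
Definition vs (P : seq pth) := flatten (map fst P).
Definition as_ (P : seq pth) := flatten (map snd P).

Definition cov (B : {set arc}) (W : {set V}) (P : seq pth) : Prop :=
  [/\ all (is_path B) P, uniq (vs P), uniq (as_ P) &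
      forall v, (v \in vs P) = (v \in W)].

Lemma chain_nil xs ars : chain xs ars -> xs != [::].
Proof. by case: xs. Qed.

Lemma chain_size xs ars : chain xs ars -> size xs = (size ars).+1.
Proof.
elim: xs ars => [|x [|y s] IH] [|a ars] //=.
by case/andP=> _ /IH /= ->.
Qed.

Lemma chain_rcons x s ars y c :
  chain (rcons (x :: s) y) (rcons ars c) =
  chain (x :: s) ars && precedes c (last x s) y.
Proof.
elim: s x ars => [|z s IH] x [|a ars] /=.
- by rewrite andbT.
- by case: ars => [|? ?]; rewrite /= andbF.
- by case: s {IH} => [|w s]; rewrite /= andbF.
- by have := IH z ars; rewrite /= => ->; rewrite andbA.
Qed.

Lemma chain_rcons' xs ars y c : xs != [::] ->
  chain (rcons xs y) (rcons ars c) = chain xs ars && precedes c (last x0 xs) y.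
Proof. by case: xs => // x s _; rewrite chain_rcons. Qed.

Lemma chain_mem xs ars c : chain xs ars -> c \in ars ->
  exists s1 z w s2, xs = s1 ++ z :: w :: s2 /\ precedes c z w.
Proof.
elim: xs ars => [|x [|w s] IH] [|a ars] //=.
case/andP=> Hp Hc; rewrite in_cons; case/orP.
- by move/eqP->; exists [::], x, w, s.
- by case/(IH _ Hc)=> s1 [z [w' [s2 [E Hp']]]]; exists (x :: s1), z, w', s2; rewrite E.
Qed.

Lemma in_vs P p z : p \in P -> z \in p.1 -> z \in vs P.
Proof. by move=> pP zp; apply/flatten_mapP; exists p. Qed.

Lemma in_as P p z : p \in P -> z \in p.2 -> z \in as_ P.
Proof. by move=> pP zp; apply/flatten_mapP; exists p. Qed.

Lemma same_path P p q z : uniq (vs P) -> p \in P -> q \in P ->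
  z \in p.1 -> z \in q.1 -> p = q.
Proof.
rewrite /vs; elim: P => [|r P IH] //= U; rewrite !in_cons.
move: U; rewrite cat_uniq => /and3P[_ Hn U].
have H1 : forall q0 : pth, q0 \in P -> z \in r.1 -> z \in q0.1 -> False.
  move=> q0 sP zr zs; move/hasP: Hn; apply; exists z => //; exact: (in_vs sP zs).
case/orP=> [/eqP->|pP]; case/orP=> [/eqP->|qP] //.
- by move=> zr zq; case: (H1 _ qP zr zq).
- by move=> zp zr; case: (H1 _ pP zr zp).
- exact: IH.
Qed.

Lemma lastp_in p : p.1 != [::] -> lastp p \in p.1.
Proof. by rewrite /lastp; case: p => [[|x s] ars] //= _; exact: mem_last. Qed.

Lemma path_ne B p : is_path B p -> p.1 != [::].
Proof. by case/and4P=> /chain_nil. Qed.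

Lemma terms_uniq B P : all (is_path B) P -> uniq (vs P) -> uniq (terms P).
Proof.
elim: P => [|p P IH] //= /andP[Hp HP]; rewrite cat_uniq => /and3P[U1 Hn U2].
rewrite IH // andbT; apply/negP=> /mapP[q qP E].
move/hasP: Hn; apply; exists (lastp p); last exact: lastp_in (path_ne Hp).
rewrite E; apply: (in_vs qP); apply: lastp_in; apply: path_ne (allP HP q qP).
Qed.

Lemma terms_vs B P z : all (is_path B) P -> z \in terms P -> z \in vs P.
Proof.
move=> HP /mapP[q qP ->]; apply: (in_vs qP); apply: lastp_in; exact: path_ne (allP HP q qP).
Qed.

Lemma cov_perm B W P P' : perm_eq P P' -> cov B W P -> cov B W P'.
Proof.
move=> E [H1 H2 H3 H4].
have Ev : perm_eq (vs P) (vs P') by apply: perm_flatten; apply: perm_map.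
have Ea : perm_eq (as_ P) (as_ P') by apply: perm_flatten; apply: perm_map.
split.
- by rewrite -(perm_all _ E).
- by rewrite -(perm_uniq Ev).
- by rewrite -(perm_uniq Ea).
- by move=> v; rewrite -(perm_mem Ev).
Qed.

Lemma cat_rcons_perm (T : eqType) (s : seq T) y t : perm_eq (rcons s y ++ t) (y :: s ++ t).
Proof. by rewrite -cats1 -catA perm_catCA. Qed.

Lemma is_path_sub B (B' : {set arc}) p : is_path B p -> (forall e, e \in p.2 -> e \in B') -> is_path B' p.
Proof. by case/and4P=> H1 H2 H3 _ H; rewrite /is_path H1 H2 H3; apply/allP. Qed.

Lemma unused B W P c : cov B W P -> (forall z, z \in c -> z \in terms P) -> c \notin as_ P.
Proof.
case=> HP U1 U2 HW Hc; apply/negP=> /flatten_mapP[p pP cp].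
case/and4P: (allP HP p pP) => Hch Up _ _.
case: (chain_mem Hch cp) => s1 [z [w [s2 [E Hpr]]]].
have zc : z \in c by case/and3P: Hpr.
case/mapP: (Hc z zc) => q qP Ez.
have zq : z \in q.1 by rewrite Ez; apply: lastp_in; apply: path_ne (allP HP q qP).
have zp : z \in p.1 by rewrite E mem_cat in_cons eqxx orbT.
have Epq := same_path U1 pP qP zp zq.
move: Ez; rewrite -Epq /lastp E last_cat /= => Ez.
move: Up; rewrite E cat_uniq /= => /and3P[_ _ /andP[]].
rewrite in_cons negb_or => /andP[_ Hn] _.
have := mem_last w s2; rewrite -Ez in_cons => /orP[/eqP Ezw|].
- by move: Hpr; rewrite /precedes Ezw ltnn !andbF.
- by rewrite (negbTE Hn).
Qed.

Lemma append_cov B (B' : {set arc}) (W' : {set V}) R rest y c :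
  cov B' W' (R :: rest) -> {subset B' <= B} -> y \notin W' -> c \in B ->
  c \notin as_ (R :: rest) -> precedes c (lastp R) y ->
  cov B (y |: W') ((rcons R.1 y, rcons R.2 c) :: rest).
Proof.
case=> /= /andP[HR Hrest] U1 U2 HW sB yW cB cn Hpr.
have yn : y \notin R.1 ++ vs rest by rewrite HW.
split.
- rewrite /= (sub_all _ Hrest) ?andbT; last first.
    by move=> p Hp; apply: (is_path_sub Hp) => e ep; apply: sB; case/and4P: Hp => _ _ _ /allP; apply.
  have Hne := path_ne HR; case/and4P: HR => Hch Ux Ua Hall.
  rewrite /is_path /= chain_rcons' // Hch Hpr rcons_uniq Ux rcons_uniq Ua all_rcons cB /=.
  move: yn cn; rewrite /as_ /= !mem_cat !negb_or => /andP[-> _] /andP[-> _] /=.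
  by apply/allP=> e /(allP Hall); apply: sB.
- by rewrite /vs /= (perm_uniq (cat_rcons_perm _ _ _)) /= yn.
- by rewrite /as_ /= (perm_uniq (cat_rcons_perm _ _ _)) /= cn.
- by move=> v; rewrite /vs /= (perm_mem (cat_rcons_perm _ _ _)) in_setU1 in_cons -HW.
Qed.

Lemma remove1 B W rest y : cov B W (([:: y], [::]) :: rest) -> cov B (W :\ y) rest.
Proof.
case=> H1 H2 U2 HW.
move: H1 H2 HW; rewrite /vs /= => H1 /andP[yn U1] HW; split => //.
move=> v; rewrite in_setD1 -HW in_cons; case: eqVneq => //= ->; exact: negbTE.
Qed.

Lemma remove2 B W s1 ars y b a rest : s1 != [::] ->
  cov B W ((rcons s1 y, rcons ars b) :: rest) -> a \notin as_ ((rcons s1 y, rcons ars b) :: rest) ->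
  cov (B :\ a :\ b) (W :\ y) ((s1, ars) :: rest).
Proof.
move=> s1n [HA U1 U2 HW] an.
have /andP[HR Hrest] : is_path B (rcons s1 y, rcons ars b) && all (is_path B) rest by [].
move: U1 U2 HW an; rewrite /vs /as_ [map _ _]/= [map _ _]/= [flatten _]/= [flatten _]/=.
rewrite !(perm_uniq (cat_rcons_perm _ _ _)) => /andP[yn U1] /andP[bn U2] HW an.
have Ea : forall e, e \in ars ++ flatten [seq i.2 | i <- rest] -> e \in B :\ a :\ b.
  move=> e He; rewrite !in_setD1; apply/and3P; split.
  - by apply: contraNneq bn => <-.
  - by apply: contraNneq an => <-; rewrite (perm_mem (cat_rcons_perm _ _ _)) in_cons He orbT.
  - move: He; rewrite mem_cat => /orP[He|He].
      by case/and4P: HR => _ _ _ /allP; apply; rewrite [_.2]/= mem_rcons in_cons He orbT.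
    case/flatten_mapP: He => p pr ep.
    by case/and4P: (allP Hrest p pr) => _ _ _ /allP; apply.
split.
- apply/andP; split.
    case/and4P: HR; rewrite [_.1]/= [_.2]/= chain_rcons' // => /andP[Hch _].
    rewrite rcons_uniq => /andP[_ Ux] /[!rcons_uniq] /andP[_ Ua] _.
    rewrite /is_path [_.1]/= [_.2]/= Hch Ux Ua /=.
    by apply/allP=> e ep; apply: Ea; rewrite mem_cat ep.
  apply/allP=> p pr; apply: (is_path_sub (allP Hrest p pr)) => e ep.
  have He : e \in flatten [seq i.2 | i <- rest] by apply/flatten_mapP; exists p.
  by apply: Ea; rewrite mem_cat He orbT.
- exact: U1.
- exact: U2.
- move=> v; rewrite in_setD1 -HW (perm_mem (cat_rcons_perm _ _ _)) in_cons.
  by case: eqVneq => [->|] //=; apply: negbTE.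
Qed.

Lemma cov_arcs B W P e : cov B W P -> e \in as_ P -> e \in B.
Proof.
case=> HA _ _ _ /flatten_mapP[p pP ep].
by case/and4P: (allP HA p pP) => _ _ _ /allP; apply.
Qed.

Lemma terms_perm P P' : perm_eq P P' -> perm_eq (terms P) (terms P').
Proof. exact: perm_map. Qed.

Lemma as_perm P P' : perm_eq P P' -> perm_eq (as_ P) (as_ P').
Proof. by move=> E; apply: perm_flatten; apply: perm_map. Qed.

Lemma append_step B (B' : {set arc}) W P0 v e z :
  cov B' (W :\ v) P0 -> {subset B' <= B} -> v \in W -> e \in B -> e \notin as_ P0 ->
  z \in terms P0 -> precedes e z v ->
  exists P', [/\ cov B W P', size P' = size P0 &
    forall w, w \in terms P' -> w = v \/ (w \in terms P0 /\ w != z)].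
Proof.
move=> Hc sB vW eB en /mapP[R RP ->] Hpr.
have Pp := perm_to_rem RP.
have Hc' := cov_perm Pp Hc.
have en' : e \notin as_ (R :: rem R P0) by rewrite -(perm_mem (as_perm Pp)).
have vn : v \notin W :\ v by rewrite in_setD1 eqxx.
have H := append_cov Hc' sB vn eB en' Hpr.
rewrite setD1K // in H.
exists ((rcons R.1 v, rcons R.2 e) :: rem R P0); split => //.
  by rewrite (perm_size Pp).
have Tu : uniq (terms P0) by case: Hc => HA U1 _ _; exact: terms_uniq HA U1.
have Tp := terms_perm Pp.
move=> w; rewrite /terms /= {1}/lastp /= last_rcons in_cons => /orP[/eqP->|wr]; first by left.
right; rewrite (perm_mem Tp) in_cons wr orbT; split => //.
apply: contraTneq wr => ->.
by move: Tu; rewrite (perm_uniq Tp) /= => /andP[].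
Qed.

Lemma key (k2 : 1 < k) (m : nat) n : forall W B P, #|W| < n ->
  (forall c, c \in B -> uniq c) ->
  (forall I : {set V}, I \subset W -> independent B I -> #|I| <= m) ->
  cov B W P -> m < size P ->
  exists P', [/\ cov B W P', size P' = (size P).-1 & {subset terms P' <= terms P}].
Proof.
elim: n => [|n IH] // W B P Wn HBu Hind Hc mP.
have [HA U1 U2 HW] := Hc.
set T := [set z in terms P].
have Tu := terms_uniq HA U1.
have cardT : #|T| = size P by rewrite cardsE (card_uniqP Tu) size_map.
have TW : T \subset W.
  by apply/subsetP => z; rewrite inE => /(terms_vs HA); rewrite HW.
have : ~~ independent B T.
  by apply/negP => /(Hind _ TW); rewrite cardT leqNgt mP.
rewrite /independent negb_forall_in => /existsP[c /andP[cB /negPn /allP cT]].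
have sc : size c = k := size_tuple c.
set u := nth x0 c 0; set v := nth x0 c 1.
have cu := HBu c cB.
have c0 : 0 < size c by rewrite sc; apply: ltn_trans k2.
have c1 : 1 < size c by rewrite sc.
have Hpr : precedes c u v.
  by rewrite /precedes /u /v !mem_nth //= (index_uniq x0 c0 cu) (index_uniq x0 c1 cu).
have uT : u \in terms P by move: (cT u (mem_nth _ c0)); rewrite inE.
have vT : v \in terms P by move: (cT v (mem_nth _ c1)); rewrite inE.
have uv : u != v by rewrite /u /v (nth_uniq x0 c0 c1 cu).
have cn : c \notin as_ P by apply: (unused Hc) => z /cT; rewrite inE.
have vW : v \in W by rewrite -HW (terms_vs HA vT).
case/mapP: vT => Qy QyP Ev.
have [rest Pp] : exists rest, perm_eq P (Qy :: rest) by exists (rem Qy P); exact: perm_to_rem.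
have Hc' := cov_perm Pp Hc.
have Tp := terms_perm Pp.
have urest : u \in terms rest.
  by move: uT; rewrite (perm_mem Tp) in_cons -Ev (negbTE uv).
have trest : {subset terms rest <= terms P} by move=> w wr; rewrite (perm_mem Tp) in_cons wr orbT.
have cn' : c \notin as_ (Qy :: rest) by rewrite -(perm_mem (as_perm Pp)).
have sizer : size P = (size rest).+1 by rewrite (perm_size Pp).
have vP : v \in terms P by rewrite Ev; apply: map_f.
have HQy := allP HA Qy QyP.
move: HQy Ev Hc' cn'; case: Qy {QyP Pp Tp} => xs ars HQy Ev Hc' cn'.
have Hch : chain xs ars by case/and4P: HQy.
move: HQy Ev Hc' cn' Hch; case/lastP: xs => [|s1 y] HQy Ev Hc' cn' Hch; first by [].
rewrite /lastp /= last_rcons in Ev; subst y.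
have [E1|s1n] := eqVneq s1 [::].
  subst s1.
  have ars0 : ars = [::] by move: (chain_size Hch) => /= [] /esym /size0nil.
  subst ars.
  have Hr := remove1 Hc'.
  have [P' [H1 H2 H3]] := append_step Hr (fun e (h : e \in B) => h) vW cB cn' urest Hpr.
  exists P'; split => //; first by rewrite H2 sizer.
  by move=> w /H3 [->|[/trest]].
have sa : size ars = size s1 by move: (chain_size Hch); rewrite size_rcons => -[].
move: HQy Hc' cn' Hch sa; case/lastP: ars => [|ars1 b] HQy Hc' cn' Hch sa.
  by move: s1n; rewrite -size_eq0 -sa.
move: Hch; rewrite chain_rcons' // => /andP[Hch1 Hprb].
have Hc2 := remove2 s1n Hc' cn'.
have bB : b \in B by case/and4P: HQy => _ _ _ /allP; apply; rewrite /= mem_rcons mem_head.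
have sB' : {subset B :\ c :\ b <= B} by move=> e; rewrite !in_setD1 => /and3P[].
have Wn' : #|W :\ v| < n by move: Wn; rewrite (cardsD1 v W) vW add1n ltnS.
have HBu' : forall e, e \in B :\ c :\ b -> uniq e by move=> e /sB' /HBu.
have vc : v \in c by apply: mem_nth.
have vb : v \in b by case/and3P: Hprb.
have Hind' : forall I : {set V}, I \subset W :\ v -> independent (B :\ c :\ b) I -> #|I| <= m.
  move=> I IW HI; apply: Hind; first by apply: subset_trans IW (subD1set _ _).
  apply/forall_inP => e eB.
  case: (boolP (e \in B :\ c :\ b)) => He; first by move/forall_inP: HI; apply.
  have ve : v \in e.
    by move: He; rewrite !in_setD1 eB andbT negb_and !negbK => /orP[]/eqP->.
  apply/negP => /allP /(_ v ve) vI.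
  by move/subsetP: IW => /(_ v vI); rewrite in_setD1 eqxx.
have mP' : m < size ((s1, ars1) :: rest) by rewrite /= -sizer.
have [P' [Hc3 Hs3 Ht3]] := IH _ _ _ Wn' HBu' Hind' Hc2 mP'.
have arcsP' := cov_arcs Hc3.
case: (boolP (last x0 s1 \in terms P')) => yP'.
  have bn : b \notin as_ P' by apply/negP => /arcsP'; rewrite in_setD1 eqxx.
  have [P'' [H1 H2 H3]] := append_step Hc3 sB' vW bB bn yP' Hprb.
  exists P''; split => //; first by rewrite H2 Hs3 sizer.
  move=> w /H3 [->|[/Ht3]] //; rewrite in_cons => /orP[/eqP->|/trest wP _ //].
  by rewrite /lastp /= eqxx.
case: (boolP (u \in terms P')) => uP'.
  have cn3 : c \notin as_ P' by apply/negP => /arcsP'; rewrite !in_setD1 eqxx /= andbF.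
  have [P'' [H1 H2 H3]] := append_step Hc3 sB' vW cB cn3 uP' Hpr.
  exists P''; split => //; first by rewrite H2 Hs3 sizer.
  move=> w /H3 [->|[wP' _]] //; move: (Ht3 w wP'); rewrite in_cons => /orP[/eqP E|/trest //].
  by rewrite E in wP'; case/negP: yP'.
have sub : {subset terms P' <= filter (predC1 u) (terms rest)}.
  move=> w wP'; rewrite mem_filter /=; move: (Ht3 w wP'); rewrite in_cons => /orP[/eqP E|wr].
    by rewrite E in wP'; case/negP: yP'.
  by rewrite wr andbT; apply: contraNneq uP' => <-.
have [HA3 U13 _ _] := Hc3.
have := uniq_leq_size (terms_uniq HA3 U13) sub.
rewrite size_filter /terms size_map Hs3 /=.
have : ~~ all (predC1 u) (terms rest) by apply/negP => /allP /(_ u urest); rewrite /= eqxx.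
rewrite all_count /terms size_map => Hne Hle.
have := count_size (predC1 u) [seq lastp i | i <- rest]; rewrite size_map.
move: Hne Hle; set C := count _ _ => Hne Hle Hcs.
have : C = size rest by apply/eqP; rewrite eqn_leq Hcs Hle.
by move=> E; move: Hne; rewrite E eqxx.
Qed.

End Aux.

Theorem theorem8 (V : finType) (k : nat) (A : {set k.-tuple V}) :
  khyperdigraph A ->
  exists P : seq (seq V * seq (k.-tuple V)),
    path_cover A P /\ size P <= alpha A.
Proof.
case=> k2 _ HAu _.
case: (pickP (fun _ : V => true)) => [x0 _|V0]; last first.
  by exists [::]; split => //; split => // v; have := V0 v.
suff H : forall n (P : seq (seq V * seq (k.-tuple V))), size P < n -> cov A setT P ->
    exists P', cov A setT P' /\ size P' <= alpha A.
  set P0 := [seq ([:: v], [::] : seq (k.-tuple V)) | v <- enum V].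
  have vs0 : vs P0 = enum V by rewrite /vs /P0 -map_comp flatten_seq1.
  have : cov A setT P0.
    split.
    + apply/allP => p /mapP[v _ ->]; done.
    + by rewrite vs0 enum_uniq.
    + by rewrite /as_ /P0 -map_comp /=; elim: (enum V).
    + by move=> v; rewrite vs0 mem_enum in_setT.
  move=> Hc0; have [P' [[H1 H2 H3 H4] H5]] := H _ P0 (ltnSn _) Hc0.
  exists P'; split => //; split => // v.
  by have := H4 v; rewrite inE => ->.
elim=> [|n IH] // P Pn Hc.
case: (leqP (size P) (alpha A)) => Ha; first by exists P.
have Hind : forall I : {set V}, I \subset setT -> independent A I -> #|I| <= alpha A.
  by move=> I _ HI; rewrite /alpha; apply: (@leq_bigmax_cond _ (fun J : {set V} => independent A J) (fun J : {set V} => #|J|) I HI).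
have [P' [H1 H2 _]] := key x0 k2 (ltnSn #|[set: V]|) (fun c cA => HAu c cA) Hind Hc Ha.
apply: (IH P') => //; rewrite H2; move: Pn Ha; case: (size P) => //.
Qed.
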